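(* Let $(a,b,c,\lambda,\delta)\in(\mathbb F^\times)^4\times\mathbb F$ and let $\nu\in\mathbb F^\times$ satisfy $\nu^{d'}+\nu^{-d'}=\delta+a^{d'}\lambda^{-d'}+a^{-d'}\lambda^{d'}$. Put $\vartheta_i=\nu^{-1}q^{2i}+\nu q^{-2i}$. Then the characteristic polynomial of $A$ acting on $W_\lambda^\delta(a,b,c)$ is $\prod_{i=0}^{d'-1}(x-\vartheta_i)$, and this equals $\prod_{i=0}^{d'-1}(x-\theta_i)-\delta$.
   Context: $\mathbb F$ is an algebraically closed field and $q\in\mathbb F^\times$ a root of unity of order $d\notin\{1,2,4\}$; $d'=d$ if $d$ odd, $d'=d/2$ if $d$ even. $\triangle_q$ is the unital associative $\mathbb F$-algebra with generators $A,B,C$ subject to: each of $A+\frac{qBC-q^{-1}CB}{q^2-q^{-2}}$, $B+\frac{qCA-q^{-1}AC}{q^2-q^{-2}}$, $C+\frac{qAB-q^{-1}BA}{q^2-q^{-2}}$ is central; $\alpha,\beta,\gamma$ are these times $q+q^{-1}$. For $(a,b,c,\lambda)\in(\mathbb F^\times)^4$, $i\in\mathbb N$: $\theta_i=a\lambda^{-1}q^{2i}+a^{-1}\lambda q^{-2i}$, $\theta_i^*=b\lambda^{-1}q^{2i}+b^{-1}\lambda q^{-2i}$, $\varphi_i=a^{-1}b^{-1}\lambda q(q^i-q^{-i})(\lambda^{-1}q^{i-1}-\lambda q^{1-i})(q^{-i}-abc\lambda^{-1}q^{i-1})(q^{-i}-abc^{-1}\lambda^{-1}q^{i-1})$. $M_\lambda(a,b,c)$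 has basis $\{m_i\}_{i\in\mathbb N}$, $(A-\theta_i)m_i=m_{i+1}$, $(B-\theta_i^* )m_i=\varphi_im_{i-1}$, $\alpha,\beta,\gamma$ acting as $(b+b^{-1})(c+c^{-1})+(a+a^{-1})(\lambda q+\lambda^{-1}q^{-1})$, $(c+c^{-1})(a+a^{-1})+(b+b^{-1})(\lambda q+\lambda^{-1}q^{-1})$, $(a+a^{-1})(b+b^{-1})+(c+c^{-1})(\lambda q+\lambda^{-1}q^{-1})$. $W_\lambda^\delta(a,b,c)$ is the quotient of $M_\lambda(a,b,c)$ by the span of $\{\delta m_i-m_{d'+i}\}_{i\in\mathbb N}$ (dimension $d'$). *)

(* Defs.v *)
From HB Require Import structures.
From mathcomp Require Import all_boot all_order all_algebra.
Set Implicit Arguments. Unset Strict Implicit. Unset Printing Implicit Defensive.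
Import GRing.Theory.
Local Open Scope ring_scope.

Definition dprime (d : nat) : nat := if odd d then d else d./2.

Definition theta (F : fieldType) (q a lam : F) (i : nat) : F :=
  a * lam^-1 * q ^+ (2 * i) + a^-1 * lam * q ^- (2 * i).

Definition vtheta (F : fieldType) (q nu : F) (i : nat) : F :=
  nu^-1 * q ^+ (2 * i) + nu * q ^- (2 * i).

(* W = M_lambda(a,b,c) / span{delta m_i - m_{n+i}} with n = d'.  In W the
   image of m_k equals delta^(k div n) * m_(k mod n); [Wcoord n delta k] is the
   coordinate row vector of the class of m_k in the basis (class of m_j)_{j<n}. *)
Definition Wcoord (F : fieldType) (n : nat) (delta : F) (k : nat) : 'rV[F]_n :=
  \row_(j < n) (if (k %% n)%N == j then delta ^+ (k %/ n)%N else 0).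

(* Matrix of A acting on W (row convention: row i = coordinates of A.m_i),
   from (A - theta_i) m_i = m_{i+1} in M, reduced into the quotient W. *)
Definition AonW (F : fieldType) (q a lam delta : F) (n : nat) : 'M[F]_n :=
  \matrix_(i < n) (theta q a lam i *: Wcoord n delta i + Wcoord n delta i.+1).

(* Main.v *)
Require Import Defs.
From HB Require Import structures.
From mathcomp Require Import all_boot all_order all_algebra.
From mathcomp Require Import zify ring.
Import GRing.Theory.
Local Open Scope ring_scope.

Lemma AonW_E (F : fieldType) (q a lam delta : F) m (i j : 'I_m.+2) :
  AonW q a lam delta m.+2 i j =
  (if (i == j :> nat) then theta q a lam i else 0) +
  (if (i.+1 == j :> nat) then 1 else if ((i == m.+1 :> nat) && (j == 0 :> nat)) then delta else 0).
Proof.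
rewrite /AonW /Wcoord !mxE modn_small ?ltn_ord // divn_small ?ltn_ord // expr0.
rewrite (_ : theta q a lam i * _ = if (i == j :> nat) then theta q a lam i else 0); last by case: ifP; rewrite ?mulr1 ?mulr0.

have := ltn_ord i; rewrite leq_eqVlt => /orP [/eqP E|lt].
  rewrite E modnn divnn /= expr1.
  have -> : (i == m.+1 :> nat) by rewrite -eqSS E.
  rewrite (gtn_eqF (ltn_ord j)) /=.
  by rewrite [(0%N == _)]eq_sym.
rewrite modn_small // divn_small // expr0.
have -> : (i == m.+1 :> nat) = false by apply/negbTE; rewrite neq_ltn -ltnS lt.
by rewrite andFb.
Qed.

Lemma cpmxE (R : comNzRingType) n (M : 'M[R]_n) i j :
  char_poly_mx M i j = 'X *+ (i == j) - (M i j)%:P.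
Proof. by rewrite !mxE. Qed.

Lemma charpoly_AonW (F : fieldType) (q a lam delta : F) m :
  char_poly (AonW q a lam delta m.+2) =
  \prod_(i < m.+2) ('X - (theta q a lam i)%:P) - delta%:P.
Proof.
have := @AonW_E F q a lam delta m; move: (AonW q a lam delta m.+2) => A AE.
have BE : forall i j : 'I_m.+2, char_poly_mx A i j =
   'X *+ (i == j :> nat) - ((if (i == j :> nat) then theta q a lam i else 0) +
  (if (i.+1 == j :> nat) then 1 else if ((i == m.+1 :> nat) && (j == 0 :> nat)) then delta else 0))%:P.
  by move=> i j; rewrite cpmxE AE.
rewrite /char_poly; move: (char_poly_mx A) BE => B BE.
rewrite (expand_det_col _ ord0) [X in X = _]big_ord_recl [X in _ + X = _]big_ord_recr /=.
rewrite big1 ?add0r; last first.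
  move=> i _; rewrite BE /=.
  have Hi : (i.+1 == m.+1) = false by apply/negbTE; rewrite neq_ltn ltnS ltn_ord.
  by rewrite (_ : bump 0 i = i.+1) // Hi /= mulr0n addr0 polyC0 subr0 mul0r.
have C0 : cofactor (B) ord0 ord0 = \prod_(i < m.+1) ('X - (theta q a lam (lift ord0 i))%:P).
  rewrite /cofactor addn0 expr0 mul1r -det_tr det_trig.
    apply: eq_bigr => i _; rewrite !mxE BE !lift0 /= eqxx /=.
    by rewrite eqn_leq ltnn andbF /= addr0.
  apply/is_trig_mxP => i j lt; rewrite !mxE BE !lift0 /=.
  rewrite eqSS (gtn_eqF lt) /=.
  rewrite (_ : (j.+2 == i.+1) = false) /=; last by apply/negbTE/eqP; move: lt; case: i {BE} => [i ?]; case: j => [j ?] /=; lia.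
  by rewrite andbF mulr0n addr0 polyC0 subr0.
have Cm : cofactor (B) (lift ord0 ord_max) ord0 = 1.
  have LM : forall k : 'I_m.+1, lift (lift ord0 (@ord_max m)) k = k :> nat.
    by move=> k; rewrite /= /bump /= add1n leqNgt ltn_ord.
  rewrite /cofactor det_trig.
    rewrite (eq_bigr (fun _ => -1)); last first.
      move=> i _; rewrite !mxE BE LM lift0 /=.
      by rewrite (ltn_eqF (ltnSn _)) eqxx mulr0n !add0r polyC1.
    rewrite prodr_const card_ord /= addn0 -exprD addnn -mul2n exprM sqrrN !expr1n //.
  apply/is_trig_mxP => i j lt; rewrite !mxE BE LM lift0 /=.
  have -> : (i == j.+1 :> nat) = false by apply/negbTE/eqP; move: lt; case: i {BE LM} => [i ?]; case: j => [j ?] /=; lia.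
  rewrite eqSS (ltn_eqF lt) andbF.
  by rewrite mulr0n addr0 polyC0 subr0.
rewrite C0 Cm !BE [in RHS]big_ord_recl /= (_ : bump 0 m = m.+1) // eqxx /=.
rewrite mulr1n mulr0n addr0 !add0r mulr1.
by congr (_ + _).


Qed.
Lemma prodXsub (F : fieldType) n (w u y : F) : n.-primitive_root w -> u != 0 ->
  \prod_(i < n) (y - u * w ^+ i) = y ^+ n - u ^+ n.
Proof.
move=> pw u0.
have := congr1 (fun p => p.[y / u]) (factor_Xn_sub_1 pw).
rewrite horner_prod big_mkord /= hornerD hornerN hornerXn hornerC => E.
rewrite (eq_bigr (fun i : 'I_n => u * ('X - (w ^+ i)%:P).[y / u])); last first.
  by move=> i _; rewrite hornerXsubC mulrBr mulrCA divff // mulr1.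
rewrite prodrMl card_ord E mulrBr mulr1 exprMn exprVn mulrCA divff ?mulr1 //.
by rewrite expf_neq0.
Qed.

Lemma evalP (F : fieldType) n (w u y : F) : n.-primitive_root w -> u != 0 -> y != 0 ->
  \prod_(i < n) (y + y^-1 - (u * w ^+ i + u^-1 * (w ^+ i)^-1))
  = y ^+ n + y ^- n - (u ^+ n + u ^- n).
Proof.
move=> pw u0 y0.
have n0 := prim_order_gt0 pw.
have w0 : w != 0 by rewrite (prim_root_eq0 pw) -lt0n.
have pw' : n.-primitive_root (w^-1).
  have -> : w^-1 = w ^+ n.-1.
    apply: (mulIf w0); rewrite mulVf // -exprSr prednK //.
    by rewrite prim_expr_order.
  by rewrite prim_root_exp_coprime // coprimePn.
rewrite (eq_bigr (fun i : 'I_n => (y - u * w ^+ i) * ((y - u^-1 * w^-1 ^+ i) * y^-1))); last first.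
  move=> i _; rewrite exprVn.
  have wi0 : w ^+ i != 0 by rewrite expf_neq0.
  by field; rewrite y0 u0 wi0.
rewrite big_split /= prodrMr card_ord prodXsub // prodXsub ?invr_eq0 //.
rewrite !exprVn.
have Y0 : y ^+ n != 0 by rewrite expf_neq0.
have U0 : u ^+ n != 0 by rewrite expf_neq0.
move: (y ^+ n) (u ^+ n) Y0 U0 => Y U Y0 U0.
by field; rewrite U0 Y0.
Qed.
Lemma fresh (F : closedFieldType) (s : seq F) : exists x, x \notin s.
Proof.
set p := \prod_(a <- 0 :: s) ('X - a%:P) + 1.
have sp : size p = (size s).+2.
  by rewrite /p size_addl size_prod_XsubC // size_poly1.
have [x rx] : exists x, root p x by apply/closed_rootP; rewrite sp.
exists x; apply/negP => xs.
move: rx; rewrite /root /p hornerD hornerC.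
have : root (\prod_(a <- 0 :: s) ('X - a%:P)) x by rewrite root_prod_XsubC inE xs orbT.
by move=> /rootP ->; rewrite add0r oner_eq0.
Qed.

Lemma uniq_seq_ex (F : closedFieldType) k : exists s : seq F, uniq s /\ size s = k.
Proof.
elim: k => [|k [s [us ss]]]; first by exists [::].
have [x xs] := fresh _ s.
by exists (x :: s); rewrite /= xs us ss.
Qed.

Lemma poly_eq0_pointwise (F : closedFieldType) (p : {poly F}) :
  (forall x, p.[x] = 0) -> p = 0.
Proof.
move=> H; apply/eqP; apply/negPn/negP => p0.
have [s [us ss]] := uniq_seq_ex F (size p).
have ar : all (root p) s by apply/allP => x _; apply/rootP.
by have := max_poly_roots p0 ar us; rewrite ss ltnn.
Qed.

Lemma solve_y (F : closedFieldType) (x : F) : exists y, y != 0 /\ y + y^-1 = x.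
Proof.
set p := ('X - x%:P) * 'X + 1.
have sp : size p = 3.
  rewrite /p size_addl size_mulX ?size_XsubC ?size_poly1 //.
  1,2: by rewrite -size_poly_eq0 size_XsubC.
have [y ry] : exists y, root p y by apply/closed_rootP; rewrite sp.
move: ry; rewrite /root /p !hornerE => /eqP E.
have y0 : y != 0 by apply/eqP => y0; move: E; rewrite y0 mulr0 add0r => /eqP; rewrite oner_eq0.
exists y; split => //.
apply: (mulIf y0); rewrite mulrDl mulVf //.
by apply/eqP; rewrite -subr_eq0 -E; apply/eqP; ring.
Qed.
Lemma dprime_ge2 d : (0 < d)%N -> [&& d != 1%N, d != 2%N & d != 4%N]%N -> (2 <= dprime d)%N.
Proof.
move=> d0 /and3P [/eqP h1 /eqP h2 /eqP h4].
have := odd_double_half d; rewrite /dprime -muln2.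
case: (odd d) => /= E; lia.
Qed.

Lemma prim_dprime (F : fieldType) (q : F) d : d.-primitive_root q ->
  (dprime d).-primitive_root (q ^+ 2).
Proof.
move=> hq; have d0 := prim_order_gt0 hq.
rewrite /dprime; case: ifP => od.
  by rewrite prim_root_exp_coprime // coprime2n.
have E : d = (d./2 * 2)%N by have := odd_double_half d; rewrite od muln2 add0n.
have h0 : (0 < d./2)%N by move: d0; rewrite {1}E; lia.
have := @dvdn_prim_root _ _ _ hq (d./2).
have -> : (d %/ d./2 = 2)%N by rewrite {1}E mulKn.
by rewrite {2}E dvdn_mulr //; apply.
Qed.

Lemma prod_diff (F : closedFieldType) n (w u v : F) : n.-primitive_root w -> u != 0 -> v != 0 ->
  \prod_(i < n) ('X - (v * w ^+ i + v^-1 * (w ^+ i)^-1)%:P)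
  = \prod_(i < n) ('X - (u * w ^+ i + u^-1 * (w ^+ i)^-1)%:P)
    + ((u ^+ n + u ^- n) - (v ^+ n + v ^- n))%:P.
Proof.
move=> pw u0 v0; apply/eqP; rewrite -subr_eq0; apply/eqP.
apply: poly_eq0_pointwise => x.
have [y [y0 <-]] := solve_y _ x.
rewrite hornerD hornerN hornerD hornerC !horner_prod.
under eq_bigr do rewrite hornerXsubC.
under [X in _ - (X + _)]eq_bigr do rewrite hornerXsubC.
rewrite !evalP //.
ring.
Qed.

Theorem lemma8p3 (F : closedFieldType) (q : F) (d : nat)
  (hq : d.-primitive_root q) (hd : [&& d != 1%N, d != 2%N & d != 4%N]%N)
  (a b c lam delta nu : F)
  (ha : a != 0) (hb : b != 0) (hc : c != 0) (hlam : lam != 0) (hnu : nu != 0)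
  (hnu_eq : nu ^+ dprime d + nu ^- dprime d
            = delta + a ^+ dprime d * lam ^- dprime d + a ^- dprime d * lam ^+ dprime d) :
  char_poly (AonW q a lam delta (dprime d))
    = \prod_(i < dprime d) ('X - (vtheta q nu i)%:P)
  /\ \prod_(i < dprime d) ('X - (vtheta q nu i)%:P)
    = \prod_(i < dprime d) ('X - (theta q a lam i)%:P) - delta%:P.
Proof.
have d0 := prim_order_gt0 hq.
have n2 := @dprime_ge2 d d0 hd.
have pw := @prim_dprime _ q d hq.
move: hnu_eq pw n2; rewrite /vtheta /theta.
have EV : forall i, q ^- (2 * i) = ((q ^+ 2) ^+ i)^-1 by move=> i; rewrite exprM.
have EP : forall i, q ^+ (2 * i) = (q ^+ 2) ^+ i by move=> i; rewrite exprM.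
move: (dprime d) => n hnu_eq pw n2.
have E2 : \prod_(i < n) ('X - (nu^-1 * q ^+ (2 * i) + nu * q ^- (2 * i))%:P)
    = \prod_(i < n) ('X - (a * lam^-1 * q ^+ (2 * i) + a^-1 * lam * q ^- (2 * i))%:P) - delta%:P.
  rewrite (eq_bigr (fun i : 'I_n => 'X - (nu^-1 * (q ^+ 2) ^+ i + nu^-1^-1 * ((q ^+ 2) ^+ i)^-1)%:P)); last first.
    by move=> i _; rewrite EV EP invrK.
  rewrite [in RHS](eq_bigr (fun i : 'I_n => 'X - ((a * lam^-1) * (q ^+ 2) ^+ i + (a * lam^-1)^-1 * ((q ^+ 2) ^+ i)^-1)%:P)); last first.
    by move=> i _; rewrite EV EP invfM invrK.
  rewrite (@prod_diff F n (q ^+ 2) (a * lam^-1)) ?mulf_neq0 ?invr_eq0 //.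
  rewrite -polyCN; congr (_ + _%:P).
  have -> : delta = nu ^+ n + nu ^- n - a ^+ n / lam ^+ n - a ^- n * lam ^+ n by rewrite hnu_eq; ring.
  rewrite exprMn !exprVn.
  have A0 : a ^+ n != 0 by rewrite expf_neq0.
  have L0 : lam ^+ n != 0 by rewrite expf_neq0.
  have N0 : nu ^+ n != 0 by rewrite expf_neq0.
  move: (a ^+ n) (lam ^+ n) (nu ^+ n) A0 L0 N0 => A L N A0 L0 N0.
  by field; rewrite A0 L0 N0 oner_eq0.
split => //.
case: n n2 pw hnu_eq E2 => [|[|m]] // _ pw hnu_eq E2.
by rewrite charpoly_AonW E2.
Qed.
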